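(* Let $\mathsf{V}$ be a congruence distributive variety of $\mathcal{L}$-algebras that has the congruence extension property and a guarded deduction theorem. If $\mathrm{Th}(\mathsf{V})$ has a model completion, then $\mathsf{V}$ has equationally definable principal congruences.
   Context: $\mathcal{L}$ is an algebraic first-order language with at least one constant symbol. For a class $\mathsf{K}$ and a formula $\alpha$ with free variables, $\mathsf{K}\models\alpha$ means every member satisfies $\alpha$ under every assignment. A model completion of a theory $T$ is a model complete theory $T^*$ with the same universal consequences as $T$ such that for every model $M$ of $T$, $T^*$ plus the diagram of $M$ is complete. $\mathsf{V}$ has the congruence extension property if for every $\mathbf{A}\in\mathsf{V}$, every congruence of a subalgebra of $\mathbf{A}$ is the restriction of a congruence of $\mathbf{A}$. $\mathsf{V}$ has equationally definable principal congruences if there is a conjunction of equations $\alpha(x_1,x_2,y_1,y_2)$ such that for all $\mathbf{A}\in\mathsf{V}$, $a_1,a_2,b_1,b_2\in A$: $(a_1,a_2)\in\mathrm{Cg}^{\mathbf{A}}(b_1,b_2)$ iff $\mathbf{A}\models\alpha(a_1,a_2,b_1,b_2)$, where $\mathrm{Cg}^{\mathbf{A}}(b_1,b_2)$ is the congruence of $\mathbf{A}$ generated by $(b_1,b_2)$. $\mathsf{V}$ has a guarded deduction theorem if there exist conjunctions of equations $\gamma(x_1,x_2,y_1,y_2,\overline{z})$ and $\varphi(x_1,x_2,y_1,y_2,\overline{z})$ (with $\overline{z}$ a finite set of variables) such that for every finite set of variables $\overline{w}$ with $\overline{w}\cap\overline{z}=\emptyset$, all terms $s_1,s_2,t_1,t_2$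 in the variables $\overline{w}$, and every conjunction of equations $\pi(\overline{w})$: (i) $\mathsf{V}\models(\pi\mathbin{\&}t_1\approx t_2)\to s_1\approx s_2$ iff $\mathsf{V}\models\pi\to\forall\overline{z}.(\gamma\to\varphi)(s_1,s_2,t_1,t_2,\overline{z})$; and (ii) for every equation $\sigma(\overline{w})$, $\mathsf{V}\models(\pi\mathbin{\&}\gamma(s_1,s_2,t_1,t_2,\overline{z}))\to\sigma$ iff $\mathsf{V}\models\pi\to\sigma$. *)

(* Defs.v *)
From mathcomp Require Import all_boot.
Set Warnings "-notation-overridden".
Set Implicit Arguments. Unset Strict Implicit. Unset Printing Implicit Defensive.

Record language := Language { sym : Type; ar : sym -> nat }.

Record algebra (L : language) := Algebra {
  carrier :> Type;
  op : forall s : sym L, ('I_(ar s) -> carrier) -> carrier }.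
Arguments op {L} _ s _.

Inductive term (L : language) (X : Type) : Type :=
| Var : X -> term L X
| App : forall s : sym L, ('I_(ar s) -> term L X) -> term L X.
Arguments Var {L X} _.
Arguments App {L X} s _.

Fixpoint eval (L : language) (A : algebra L) (X : Type) (e : X -> A)
  (t : term L X) : A :=
  match t with
  | Var x => e x
  | App s f => op A s (fun i => eval e (f i))
  end.

Fixpoint tmap (L : language) (X Y : Type) (f : X -> Y) (t : term L X) : term L Y :=
  match t with
  | Var x => Var (f x)
  | App s g => App s (fun i => tmap f (g i))
  end.

Fixpoint occurs_t (L : language) (X : Type) (x : X) (t : term L X) : Prop :=
  match t with
  | Var y => y = x
  | App s f => exists i, occurs_t x (f i)
  end.

Definition holds (L : language) (A : algebra L) (X : Type) (e : X -> A)
  (pi : seq (term L X * term L X)) : Prop :=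
  foldr (fun p P => eval e p.1 = eval e p.2 /\ P) True pi.

(* the assignment x1,x2,y1,y2 |-> a1,a2,b1,b2 *)
Definition asg4 (A : Type) (a1 a2 b1 b2 : A) : 'I_4 -> A :=
  fun i => nth a1 [:: a1; a2; b1; b2] i.

Definition is_variety (L : language) (V : algebra L -> Prop) : Prop :=
  exists E : term L nat * term L nat -> Prop,
    forall A : algebra L, V A <->
      (forall p, E p -> forall e : nat -> A, eval e p.1 = eval e p.2).

(* R restricted to the subset P is a congruence of the subalgebra with universe P. *)
Definition congruence_on (L : language) (A : algebra L) (P : A -> Prop)
  (R : A -> A -> Prop) : Prop :=
  [/\ (forall x, P x -> R x x),
      (forall x y, P x -> P y -> R x y -> R y x),
      (forall x y z, P x -> P y -> P z -> R x y -> R y z -> R x z) &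
      (forall (s : sym L) (f g : 'I_(ar s) -> A),
          (forall i, P (f i)) -> (forall i, P (g i)) ->
          (forall i, R (f i) (g i)) -> R (op A s f) (op A s g))].

Definition congruence (L : language) (A : algebra L) (R : A -> A -> Prop) : Prop :=
  congruence_on (fun _ => True) R.

Definition Cg (L : language) (A : algebra L) (S : A -> A -> Prop) : A -> A -> Prop :=
  fun x y => forall R, congruence R -> (forall a b, S a b -> R a b) -> R x y.

Definition subuniverse (L : language) (A : algebra L) (P : A -> Prop) : Prop :=
  forall (s : sym L) (f : 'I_(ar s) -> A), (forall i, P (f i)) -> P (op A s f).

(* Congruence distributivity: every Con A (A in V) is a distributive lattice
   (meet = intersection, join = generated congruence of the union). *)
Definition congruence_distributive (L : language) (V : algebra L -> Prop) : Prop :=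
  forall A : algebra L, V A ->
  forall th ph ps : A -> A -> Prop,
    congruence th -> congruence ph -> congruence ps ->
    forall x y,
      (th x y /\ Cg (fun a b => ph a b \/ ps a b) x y) <->
      Cg (fun a b => (th a b /\ ph a b) \/ (th a b /\ ps a b)) x y.

Definition CEP (L : language) (V : algebra L -> Prop) : Prop :=
  forall A : algebra L, V A ->
  forall P : A -> Prop, subuniverse P ->
  forall R : A -> A -> Prop, congruence_on P R ->
  exists Th : A -> A -> Prop, congruence Th /\
    (forall x y, P x -> P y -> (R x y <-> Th x y)).

Definition EDPC (L : language) (V : algebra L -> Prop) : Prop :=
  exists alpha : seq (term L 'I_4 * term L 'I_4),
    forall A : algebra L, V A -> forall a1 a2 b1 b2 : A,
      Cg (fun x y => x = b1 /\ y = b2) a1 a2 <-> holds (asg4 a1 a2 b1 b2) alpha.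

(* assignment for gamma/phi(s1,s2,t1,t2,z) : variables x1,x2,y1,y2 (inl) and z (inr) *)
Definition gasg (L : language) (A : algebra L) (n k : nat) (e : 'I_n -> A)
  (s1 s2 t1 t2 : term L 'I_n) (z : 'I_k -> A) : 'I_4 + 'I_k -> A :=
  fun v => match v with
           | inl i => asg4 (eval e s1) (eval e s2) (eval e t1) (eval e t2) i
           | inr j => z j
           end.

(* Guarded deduction theorem.  The variables z are 'I_k; the variables w are
   'I_n (disjointness from z is built in by using separate variable types). *)
Definition guarded_deduction_theorem (L : language) (V : algebra L -> Prop) : Prop :=
  exists (k : nat) (gamma phi : seq (term L ('I_4 + 'I_k) * term L ('I_4 + 'I_k))),
  forall (n : nat) (s1 s2 t1 t2 : term L 'I_n) (pi : seq (term L 'I_n * term L 'I_n)),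
    ((forall A : algebra L, V A -> forall e : 'I_n -> A,
         holds e pi -> eval e t1 = eval e t2 -> eval e s1 = eval e s2)
     <->
     (forall A : algebra L, V A -> forall e : 'I_n -> A,
         holds e pi -> forall z : 'I_k -> A,
           holds (gasg e s1 s2 t1 t2 z) gamma -> holds (gasg e s1 s2 t1 t2 z) phi))
    /\
    (forall sigma : term L 'I_n * term L 'I_n,
       (forall A : algebra L, V A -> forall (e : 'I_n -> A) (z : 'I_k -> A),
           holds e pi -> holds (gasg e s1 s2 t1 t2 z) gamma ->
           eval e sigma.1 = eval e sigma.2)
       <->
       (forall A : algebra L, V A -> forall e : 'I_n -> A,
           holds e pi -> eval e sigma.1 = eval e sigma.2)).

(* Formulas of L expanded by new constants C; variables are nat. *)
Inductive fm (L : language) (C : Type) : Type :=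
| FEq : term L (nat + C) -> term L (nat + C) -> fm L C
| FBot : fm L C
| FNeg : fm L C -> fm L C
| FAnd : fm L C -> fm L C -> fm L C
| FOr : fm L C -> fm L C -> fm L C
| FImp : fm L C -> fm L C -> fm L C
| FAll : nat -> fm L C -> fm L C
| FEx : nat -> fm L C -> fm L C.
Arguments FBot {L C}.

Definition sum_mapr (C D : Type) (f : C -> D) (v : nat + C) : nat + D :=
  match v with inl n => inl n | inr c => inr (f c) end.

Fixpoint fm_map (L : language) (C D : Type) (f : C -> D) (p : fm L C) : fm L D :=
  match p with
  | FEq t1 t2 => FEq (tmap (sum_mapr f) t1) (tmap (sum_mapr f) t2)
  | FBot => FBot
  | FNeg q => FNeg (fm_map f q)
  | FAnd q r => FAnd (fm_map f q) (fm_map f r)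
  | FOr q r => FOr (fm_map f q) (fm_map f r)
  | FImp q r => FImp (fm_map f q) (fm_map f r)
  | FAll n q => FAll n (fm_map f q)
  | FEx n q => FEx n (fm_map f q)
  end.

Definition env (A C : Type) (e : nat -> A) (c : C -> A) (v : nat + C) : A :=
  match v with inl n => e n | inr k => c k end.

Definition upd (A : Type) (e : nat -> A) (n : nat) (a : A) : nat -> A :=
  fun m => if m == n then a else e m.

Fixpoint sat (L : language) (A : algebra L) (C : Type) (c : C -> A)
  (e : nat -> A) (p : fm L C) : Prop :=
  match p with
  | FEq t1 t2 => eval (env e c) t1 = eval (env e c) t2
  | FBot => False
  | FNeg q => ~ sat c e q
  | FAnd q r => sat c e q /\ sat c e r
  | FOr q r => sat c e q \/ sat c e r
  | FImp q r => sat c e q -> sat c e r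
  | FAll n q => forall a : A, sat c (upd e n a) q
  | FEx n q => exists a : A, sat c (upd e n a) q
  end.

Fixpoint free_in (L : language) (C : Type) (n : nat) (p : fm L C) : Prop :=
  match p with
  | FEq t1 t2 => occurs_t (inl n) t1 \/ occurs_t (inl n) t2
  | FBot => False
  | FNeg q => free_in n q
  | FAnd q r | FOr q r | FImp q r => free_in n q \/ free_in n r
  | FAll m q | FEx m q => n <> m /\ free_in n q
  end.

Definition sentence (L : language) (C : Type) (p : fm L C) : Prop :=
  forall n, ~ free_in n p.

Inductive qfree (L : language) (C : Type) : fm L C -> Prop :=
| qf_eq t1 t2 : qfree (FEq t1 t2)
| qf_bot : qfree FBot
| qf_neg q : qfree q -> qfree (FNeg q)
| qf_and q r : qfree q -> qfree r -> qfree (FAnd q r)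
| qf_or q r : qfree q -> qfree r -> qfree (FOr q r)
| qf_imp q r : qfree q -> qfree r -> qfree (FImp q r).

Inductive universal (L : language) (C : Type) : fm L C -> Prop :=
| univ_qf q : qfree q -> universal q
| univ_all n q : universal q -> universal (FAll n q).

(* Theories (sets of formulas; a model satisfies their universal closures). *)
Definition models (L : language) (A : algebra L) (C : Type) (c : C -> A)
  (T : fm L C -> Prop) : Prop :=
  forall p, T p -> forall e : nat -> A, sat c e p.

Definition entails (L : language) (C : Type) (T : fm L C -> Prop) (p : fm L C) : Prop :=
  forall (B : algebra L) (c : C -> B), models c T -> forall e : nat -> B, sat c e p.

Definition complete (L : language) (C : Type) (T : fm L C -> Prop) : Prop :=
  (exists (B : algebra L) (c : C -> B), models c T) /\
  (forall p, sentence p -> entails T p \/ entails T (FNeg p)).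

Definition vd (A : Type) : void -> A := fun v => match v with end.

Definition Th (L : language) (V : algebra L -> Prop) : fm L void -> Prop :=
  fun p => sentence p /\ forall A : algebra L, V A -> forall e : nat -> A, sat (vd A) e p.

Definition model_complete (L : language) (T : fm L void -> Prop) : Prop :=
  forall (A B : algebra L), models (vd A) T -> models (vd B) T ->
  forall h : A -> B, injective h ->
    (forall (s : sym L) (f : 'I_(ar s) -> A), h (op A s f) = op B s (fun i => h (f i))) ->
    forall (p : fm L void) (e : nat -> A), sat (vd A) e p <-> sat (vd B) (fun n => h (e n)) p.

Definition diagram (L : language) (M : algebra L) : fm L M -> Prop :=
  fun p => exists t1 t2 : term L M,
    (p = FEq (tmap inr t1) (tmap inr t2) /\ eval id t1 = eval id t2) \/
    (p = FNeg (FEq (tmap inr t1) (tmap inr t2)) /\ eval id t1 <> eval id t2).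

Definition model_completion (L : language) (T Ts : fm L void -> Prop) : Prop :=
  [/\ model_complete Ts,
      (forall p, sentence p -> universal p -> (entails T p <-> entails Ts p)) &
      (forall M : algebra L, models (vd M) T ->
         complete (fun p : fm L M =>
                     (exists q, Ts q /\ p = fm_map (vd M) q) \/ @diagram L M p))].

(* Main.v *)
From Stdlib Require List.
From Stdlib Require Import ClassicalEpsilon FunctionalExtensionality PropExtensionality ProofIrrelevance Classical.
Require Import Defs.
From mathcomp Require Import all_boot.
From mathcomp Require boolp classical_sets filter.
Set Implicit Arguments. Unset Strict Implicit. Unset Printing Implicit Defensive.


Section Basics.
Variable L : language.

Lemma eval_tmap (A : algebra L) X Y (f : X -> Y) (e : Y -> A) (t : term L X) :
  eval e (tmap f t) = eval (fun x => e (f x)) t.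
Proof.
elim: t => [x|s g IH] //=; congr (op A s); apply: functional_extensionality => i; exact: IH.
Qed.

Definition hom (A B : algebra L) (h : A -> B) :=
  forall s (f : 'I_(ar s) -> A), h (op A s f) = op B s (fun i => h (f i)).

Lemma eval_hom (A B : algebra L) (h : A -> B) X (e : X -> A) (t : term L X) :
  hom h -> h (eval e t) = eval (fun x => h (e x)) t.
Proof.
move=> hh; elim: t => [x|s g IH] //=; rewrite hh; congr (op B s);
apply: functional_extensionality => i; exact: IH.
Qed.

Lemma holdsP (A : algebra L) X (e : X -> A) pi :
  holds e pi <-> forall p, List.In p pi -> eval e p.1 = eval e p.2.
Proof.
elim: pi => [|p pi IH] /=; first by split.
split.
- move=> [h1 /IH h2] q [<-|Hq] //; exact: h2.
- move=> H; split; first by apply: H; left.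
  by apply/IH => q Hq; apply: H; right.
Qed.

Lemma holds_cat (A : algebra L) X (e : X -> A) p1 p2 :
  holds e (p1 ++ p2) <-> holds e p1 /\ holds e p2.
Proof. by elim: p1 => [|p p1 IH] /=; [tauto|rewrite IH; tauto]. Qed.

Definition mapeq X Y (f : X -> Y) (pi : seq (term L X * term L X)) :=
  map (fun p => (tmap f p.1, tmap f p.2)) pi.

Lemma holds_map (A : algebra L) X Y (f : X -> Y) (e : Y -> A) pi :
  holds e (mapeq f pi) <-> holds (fun x => e (f x)) pi.
Proof. by elim: pi => [|p pi IH] //=; rewrite !eval_tmap IH. Qed.

Lemma holds_hom (A B : algebra L) (h : A -> B) X (e : X -> A) pi :
  hom h -> holds e pi -> holds (fun x => h (e x)) pi.
Proof.
move=> hh; elim: pi => [|p pi IH] //= [H1 H2]; split; last exact: IH.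
by rewrite -!eval_hom // H1.
Qed.

Lemma holds_inj (A B : algebra L) (h : A -> B) X (e : X -> A) pi :
  hom h -> injective h -> holds (fun x => h (e x)) pi -> holds e pi.
Proof.
move=> hh hi; elim: pi => [|p pi IH] //= [H1 H2]; split; last exact: IH.
by apply: hi; rewrite !eval_hom.
Qed.

Lemma inP (T : eqType) (x : T) (s : seq T) : x \in s -> List.In x s.
Proof. elim: s => [|y s IH] //=; rewrite in_cons => /orP [/eqP ->|/IH]; tauto. Qed.

Section Quot.
Variable A : algebra L.
Variable R : A -> A -> Prop.
Hypothesis HR : congruence R.

Lemma cR_refl x : R x x. Proof. by case: HR => h _ _ _; exact: h. Qed.
Lemma cR_sym x y : R x y -> R y x. Proof. by case: HR => _ h _ _; exact: h. Qed.
Lemma cR_trans x y z : R x y -> R y z -> R x z. Proof. by case: HR => _ _ h _; exact: h. Qed.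
Lemma cR_op s (f g : 'I_(ar s) -> A) : (forall i, R (f i) (g i)) -> R (op A s f) (op A s g).
Proof. by case: HR => _ _ _ h; exact: h. Qed.

Definition qcar := {P : A -> Prop | exists x, P = R x}.
Definition qcl (x : A) : qcar := exist _ (R x) (ex_intro _ x erefl).
Definition qrep (c : qcar) : A := proj1_sig (constructive_indefinite_description _ (proj2_sig c)).

Lemma qcl_eq x y : qcl x = qcl y <-> R x y.
Proof.
split.
- move=> H; have : R x = R y by move: H => [].
  by move=> E; rewrite E; exact: cR_refl.
- move=> Hxy; apply: eq_exist_uncurried.
  have E : R x = R y.
    apply: functional_extensionality => z; apply: propositional_extensionality.
    split => H; [apply: cR_trans (cR_sym Hxy) H| apply: cR_trans Hxy H].
  exists E; exact: proof_irrelevance.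
Qed.

Lemma qrepK c : qcl (qrep c) = c.
Proof.
rewrite /qrep; case: (constructive_indefinite_description _ _) => x /= Hx.
case: c Hx => P HP /= Hx; subst P; apply: eq_exist_uncurried; exists erefl; exact: proof_irrelevance.
Qed.

Lemma qrepR x : R (qrep (qcl x)) x.
Proof. by apply/qcl_eq; rewrite qrepK. Qed.

Definition qalg : algebra L := @Algebra L qcar (fun s F => qcl (op A s (fun i => qrep (F i)))).

Lemma eval_q X (e : X -> A) t : eval (A := qalg) (fun v => qcl (e v)) t = qcl (eval e t).
Proof.
elim: t => [x|s g IH] //=; apply/qcl_eq; apply: cR_op => i; rewrite IH; exact: qrepR.
Qed.

Lemma eval_q' X (e : X -> qalg) t : eval e t = qcl (eval (fun v => qrep (e v)) t).
Proof.
rewrite -eval_q; congr eval; apply: functional_extensionality => v; by rewrite qrepK.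
Qed.

Lemma qcl_hom : hom (B := qalg) qcl.
Proof. move=> s f /=; apply/qcl_eq; apply: cR_op => i; apply: cR_sym; exact: qrepR. Qed.

End Quot.

Definition talg (X : Type) : algebra L := @Algebra L (term L X) (fun s f => App s f).

Lemma eval_subst (A : algebra L) X Y (s : Y -> term L X) (e : X -> A) (t : term L Y) :
  eval e (eval (A := talg X) s t) = eval (fun y => eval e (s y)) t.
Proof.
elim: t => [y|s' g IH] //=; congr (op A s'); apply: functional_extensionality => i; exact: IH.
Qed.

Section Sub.
Variable A : algebra L.
Variable P : A -> Prop.
Hypothesis HP : subuniverse P.
Definition subalg : algebra L :=
  @Algebra L {x | P x} (fun s f => exist _ (op A s (fun i => proj1_sig (f i)))
                                         (HP (fun i => proj2_sig (f i)))).
Lemma sub_hom : hom (A := subalg) (fun x => proj1_sig x).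
Proof. by []. Qed.
Lemma sub_inj : injective (fun x : subalg => proj1_sig x).
Proof. move=> [x Hx] [y Hy] /= E; subst; congr exist; exact: proof_irrelevance. Qed.
End Sub.

Definition palg (A B : algebra L) : algebra L :=
  @Algebra L (A * B) (fun s f => (op A s (fun i => (f i).1), op B s (fun i => (f i).2))).

Lemma eval_p (A B : algebra L) X (e : X -> palg A B) t :
  eval e t = (eval (fun x => (e x).1) t, eval (fun x => (e x).2) t).
Proof.
elim: t => [x|s g IH] /=; first by case: (e x).
congr pair; congr (op _ s); apply: functional_extensionality => i; by rewrite IH.
Qed.

Definition unitalg : algebra L := @Algebra L unit (fun _ _ => tt).

Definition Palg (I : Type) (A : I -> algebra L) : algebra L :=
  @Algebra L (forall i, A i) (fun s f i => op (A i) s (fun j => f j i)).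

Lemma eval_P (I : Type) (A : I -> algebra L) X (e : X -> Palg A) t i :
  eval e t i = eval (fun x => e x i) t.
Proof. elim: t => [x|s g IH] //=; congr (op _ s); apply: functional_extensionality => j; exact: IH. Qed.

End Basics.


Lemma in_flatten T U (F : U -> seq T) (l : seq U) d :
  List.In d (flatten (map F l)) <-> exists j, List.In j l /\ List.In d (F j).
Proof.
elim: l => [|j l IH] /=; first by split => // [[j []]].
rewrite List.in_app_iff IH; split.
- by move=> [H|[j' [H1 H2]]]; [exists j; tauto| exists j'; tauto].
- by move=> [j' [[<-|H1] H2]]; [left| right; exists j'].
Qed.

Lemma enum_In n (j : 'I_n) : List.In j (enum 'I_n).
Proof. by apply: inP; rewrite mem_enum. Qed.

Section Var.
Variable L : language.
Variable V : algebra L -> Prop.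
Hypothesis hvar : is_variety V.

Lemma V_intro (A : algebra L) :
  (forall (B : algebra L) (h : A -> B) , V B -> hom h -> injective h -> V A) -> True.
Proof. by []. Qed.

Lemma V_qalg (A : algebra L) (R : A -> A -> Prop) (HR : congruence R) :
  V A -> V (qalg R).
Proof.
case: hvar => E HE /HE HA; apply/HE => p Ep e.
rewrite !eval_q' //; congr qcl; exact: HA.
Qed.

Lemma V_sub (A : algebra L) (P : A -> Prop) (HP : subuniverse P) : V A -> V (subalg HP).
Proof.
case: hvar => E HE /HE HA; apply/HE => p Ep e.
apply: (@sub_inj _ _ _ HP); rewrite !eval_hom //; exact: HA.
Qed.

Lemma V_palg (A B : algebra L) : V A -> V B -> V (palg A B).
Proof.
case: hvar => E HE /HE HA /HE HB; apply/HE => p Ep e.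
by rewrite !eval_p HA // HB.
Qed.

Lemma V_unit : V (unitalg L).
Proof. case: hvar => E HE; apply/HE => p Ep e; by case: (eval e p.1); case: (eval e p.2). Qed.

Lemma V_Palg (I : Type) (A : I -> algebra L) : (forall i, V (A i)) -> V (Palg A).
Proof.
case: hvar => E HE HA; apply/HE => p Ep e; apply: functional_extensionality_dep => i.
rewrite !eval_P; by move: (HA i) => /HE; apply.
Qed.

Definition VC X (pi : seq (term L X * term L X)) (p q : term L X) :=
  forall A : algebra L, V A -> forall e : X -> A, holds e pi -> eval e p = eval e q.

Lemma VC_mono X (pi pi' : seq (term L X * term L X)) p q :
  (forall d, List.In d pi -> List.In d pi') -> VC pi p q -> VC pi' p q.
Proof.
move=> S H A VA e /holdsP Hp; apply: H => //; apply/holdsP => d Hd; apply: Hp; exact: S.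
Qed.

Section Free.
Variable X : Type.
Variable D : term L X * term L X -> Prop.
Variable G : seq (term L X * term L X).

Definition relF (p q : term L X) :=
  exists pA : seq (term L X * term L X), (forall d, List.In d pA -> D d) /\ VC (pA ++ G) p q.

Lemma holds_sub Y (A : algebra L) (e : Y -> A) (pi pi' : seq (term L Y * term L Y)) :
  (forall d, List.In d pi -> List.In d pi') -> holds e pi' -> holds e pi.
Proof. move=> S /holdsP H; apply/holdsP => d Hd; apply: H; exact: S. Qed.

Lemma relF_cong : congruence (A := talg L X) relF.
Proof.
split.
- by move=> x _; exists [::]; split.
- move=> x y _ _ [pA [H1 H2]]; exists pA; split => // A VA e He; symmetry; exact: H2.
- move=> x y z _ _ _ [pA [H1 H2]] [pB [H3 H4]]; exists (pA ++ pB); split.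
    by move=> d /List.in_app_iff [] ?; [apply: H1|apply: H3].
  move=> A VA e He; rewrite (H2 A VA e) ?(H4 A VA e) //; apply: holds_sub He => d;
    rewrite !List.in_app_iff; tauto.
- move=> s f g _ _ H.
  have H' : forall j, {pA | (forall d, List.In d pA -> D d) /\ VC (pA ++ G) (f j) (g j)}.
    move=> j; apply: constructive_indefinite_description; exact: H.
  exists (flatten (map (fun j => proj1_sig (H' j)) (enum 'I_(ar s)))); split.
    move=> d /in_flatten [j [_ Hj]]; exact: (proj1 (proj2_sig (H' j)) d Hj).
  move=> A VA e He /=; congr (op A s); apply: functional_extensionality => j.
  apply: (proj2 (proj2_sig (H' j))) => //; apply: holds_sub He => d.
  rewrite !List.in_app_iff => [[Hd|Hd]]; last by right.
  left; apply/in_flatten; exists j; split => //; exact: enum_In.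
Qed.

Definition Falg := qalg (A := talg L X) relF.

Lemma V_Falg : V Falg.
Proof.
case: hvar => E HE; apply/HE => p Ep e.
rewrite !(eval_q' relF_cong); apply/(qcl_eq relF_cong); exists [::]; split => // A VA e' _.
rewrite !eval_subst; by move: VA => /HE; apply.
Qed.

End Free.
End Var.


Definition ultra (I : Type) (U : (I -> Prop) -> Prop) :=
  [/\ (forall X Y : I -> Prop, U X -> (forall i, X i -> Y i) -> U Y),
      (forall X Y : I -> Prop, U X -> U Y -> U (fun i => X i /\ Y i)),
      ~ U (fun _ => False) &
      (forall X : I -> Prop, U X \/ U (fun i => ~ X i))].

Section Ultra.
Variable I : Type.
Variable U : (I -> Prop) -> Prop.
Hypothesis HU : ultra U.

Lemma U_mono (X Y : I -> Prop) : U X -> (forall i, X i -> Y i) -> U Y.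
Proof. by case: HU => h _ _ _; exact: h. Qed.
Ltac umono H := eapply U_mono; [exact H|].
Lemma U_and (X Y : I -> Prop) : U X -> U Y -> U (fun i => X i /\ Y i).
Proof. by case: HU => _ h _ _; exact: h. Qed.
Lemma U_false : ~ U (fun _ => False).
Proof. by case: HU. Qed.
Lemma U_em (X : I -> Prop) : U X \/ U (fun i => ~ X i).
Proof. by case: HU => _ _ _ h; exact: h. Qed.
Lemma U_true : U (fun _ => True).
Proof. case: (U_em (fun _ => True)) => H; first exact: H. exfalso; apply: U_false; umono H; move=> i h; by apply: h. Qed.
Lemma U_not (X : I -> Prop) : U (fun i => ~ X i) <-> ~ U X.
Proof.
split.
- move=> H1 H2; apply: U_false; umono (U_and H1 H2); move=> i; tauto.
- by case: (U_em X).
Qed.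
Lemma U_andE (X Y : I -> Prop) : U (fun i => X i /\ Y i) <-> U X /\ U Y.
Proof.
split; last by case=> ??; exact: U_and.
by move=> H; split; umono H; move=> i; case.
Qed.
Lemma U_or (X Y : I -> Prop) : U (fun i => X i \/ Y i) <-> U X \/ U Y.
Proof.
split; last by case=> H; umono H; move=> i; tauto.
move=> H; apply: NNPP => H'.
have H1 : U (fun i => ~ X i) by apply/U_not => ?; apply: H'; left.
have H2 : U (fun i => ~ Y i) by apply/U_not => ?; apply: H'; right.
apply: U_false; umono (U_and H (U_and H1 H2)); move=> i; tauto.
Qed.
Lemma U_list J (X : J -> I -> Prop) (l : seq J) :
  (forall j, U (X j)) -> U (fun i => forall j, List.In j l -> X j i).
Proof.
move=> H; elim: l => [|j l IH] /=; first by umono U_true; move=> i _ j [].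
umono (U_and (H j) IH); move=> i [H1 H2] j' [<-|Hj] //; exact: H2.
Qed.
Lemma U_fin n (X : 'I_n -> I -> Prop) :
  (forall j, U (X j)) -> U (fun i => forall j, X j i).
Proof.
move=> H; umono (U_list (enum 'I_n) H); move=> i Hi j; apply: Hi; exact: enum_In.
Qed.

Variable L : language.
Variable A : I -> algebra L.

Definition Ru (f g : Palg A) := U (fun i => f i = g i).

Lemma Ru_cong : congruence Ru.
Proof.
split.
- move=> x _; umono U_true; by move=> i _.
- move=> x y _ _ H; umono H; by move=> i ->.
- move=> x y z _ _ _ H1 H2; umono (U_and H1 H2); by move=> i [-> ->].
- move=> s f g _ _ H; umono (U_fin H); move=> i Hi /=; congr (op _ s).
  apply: functional_extensionality => j; exact: Hi.
Qed.

Definition Ualg := qalg (A := Palg A) Ru.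

Lemma Ueq (f g : Palg A) : qcl Ru f = qcl Ru g <-> U (fun i => f i = g i).
Proof. exact: (qcl_eq Ru_cong). Qed.

Lemma eval_U X (e : X -> Palg A) t :
  eval (A := Ualg) (fun x => qcl Ru (e x)) t = qcl Ru (fun i => eval (fun x => e x i) t).
Proof.
rewrite (eval_q Ru_cong); congr qcl; apply: functional_extensionality_dep => i; exact: eval_P.
Qed.

Lemma holds_U X (e : X -> Palg A) pi :
  holds (A := Ualg) (fun x => qcl Ru (e x)) pi <-> U (fun i => holds (fun x => e x i) pi).
Proof.
elim: pi => [|p pi IH] /=; first by split => // _; exact: U_true.
by rewrite U_andE -IH !eval_U Ueq.
Qed.

Lemma Ualg_rep (c : Ualg) : exists f, c = qcl Ru f.
Proof. by exists (qrep c); rewrite qrepK. Qed.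

Hypothesis Hinh : forall i, exists a : A i, True.

Lemma los (p : fm L void) (e : nat -> Palg A) :
  sat (vd Ualg) (fun n => qcl Ru (e n)) p <-> U (fun i => sat (vd (A i)) (fun n => e n i) p).
Proof.
elim: p e => [t1 t2||q IH|q IHq r IHr|q IHq r IHr|q IHq r IHr|n q IH|n q IH] e /=.
- have E1 : forall t : term L (nat + void), eval (A := Ualg) (env (A := Ualg) (fun n => qcl Ru (e n)) (vd Ualg)) t =
             qcl Ru (fun i => eval (env (fun n => e n i) (vd (A i))) t).
    move=> t; rewrite -eval_U; congr eval; apply: functional_extensionality => -[m|[]] //.
  by rewrite !E1 Ueq.
- by split => // H; apply: U_false.
- by rewrite IH U_not.
- by rewrite IHq IHr U_andE.
- by rewrite IHq IHr U_or.
- have -> : (sat (vd Ualg) (fun n => qcl Ru (e n)) q -> sat (vd Ualg) (fun n => qcl Ru (e n)) r) <->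
     (~ sat (vd Ualg) (fun n => qcl Ru (e n)) q \/ sat (vd Ualg) (fun n => qcl Ru (e n)) r).
    by split; [move=> H; case: (classic (sat (vd Ualg) (fun n => qcl Ru (e n)) q)); tauto| tauto].
  rewrite IHq IHr -U_not -U_or; split; move=> H; umono H; move=> i; [tauto|].
  by case: (classic (sat (vd (A i)) (fun n0 : nat => e n0 i) q)); tauto.
- have Eu : forall f : Palg A, upd (fun m => qcl Ru (e m)) n (qcl Ru f) =
                               (fun m => qcl Ru (upd e n f m)).
    by move=> f; apply: functional_extensionality => m; rewrite /upd; case: (m == n).
  have Eu' : forall (f : Palg A) i, (fun m => upd e n f m i) = upd (fun m => e m i) n (f i).
    by move=> f i; apply: functional_extensionality => m; rewrite /upd; case: (m == n).
  split.
  + move=> H; apply: NNPP => HN; move/U_not: HN => HN.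
    have Hc : forall i, {a : A i | (exists a', ~ sat (vd (A i)) (upd (fun m => e m i) n a') q) ->
                                   ~ sat (vd (A i)) (upd (fun m => e m i) n a) q}.
      move=> i; apply: constructive_indefinite_description.
      case: (classic (exists a', ~ sat (vd (A i)) (upd (fun m => e m i) n a') q)) => [[a' Ha']|Hn].
        by exists a'.
      by case: (Hinh i) => a _; exists a.
    pose f : Palg A := fun i => proj1_sig (Hc i).
    have := H (qcl Ru f); rewrite Eu IH => Hf.
    apply: U_false; umono (U_and Hf HN); move=> i [H1 H2].
    rewrite Eu' in H1.
    apply: (proj2_sig (Hc i)) H1; apply: NNPP => H3; apply: H2 => a; apply: NNPP => H4; apply: H3; by exists a.
  + move=> H c; case: (Ualg_rep c) => f ->; rewrite Eu IH; umono H; move=> i Hi.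
    by rewrite Eu'.
- have Eu : forall f : Palg A, upd (fun m => qcl Ru (e m)) n (qcl Ru f) =
                               (fun m => qcl Ru (upd e n f m)).
    by move=> f; apply: functional_extensionality => m; rewrite /upd; case: (m == n).
  have Eu' : forall (f : Palg A) i, (fun m => upd e n f m i) = upd (fun m => e m i) n (f i).
    by move=> f i; apply: functional_extensionality => m; rewrite /upd; case: (m == n).
  split.
  + move=> [c]; case: (Ualg_rep c) => f ->; rewrite Eu IH => H; umono H; move=> i Hi.
    by exists (f i); rewrite -Eu'.
  + move=> H.
    have Hc : forall i, {a : A i | (exists a', sat (vd (A i)) (upd (fun m => e m i) n a') q) ->
                                   sat (vd (A i)) (upd (fun m => e m i) n a) q}.
      move=> i; apply: constructive_indefinite_description.
      case: (classic (exists a', sat (vd (A i)) (upd (fun m => e m i) n a') q)) => [[a' Ha']|Hn].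
        by exists a'.
      by case: (Hinh i) => a _; exists a.
    pose f : Palg A := fun i => proj1_sig (Hc i).
    exists (qcl Ru f); rewrite Eu IH; umono H; move=> i Hi; rewrite Eu'.
    exact: (proj2_sig (Hc i)).
Qed.

End Ultra.


Lemma ultra_exists (E : Type) : exists U : ((seq E) -> Prop) -> Prop,
  [/\ (forall X Y : seq E -> Prop, U X -> (forall i, X i -> Y i) -> U Y),
      (forall X Y : seq E -> Prop, U X -> U Y -> U (fun i => X i /\ Y i)),
      ~ U (fun _ => False),
      (forall X : seq E -> Prop, U X \/ U (fun i => ~ X i)) &
      (forall e, U (fun l => List.In e l))].
Proof.
pose B := fun l : seq E => (fun l' : seq E => forall e, List.In e l -> List.In e l').
pose F := filter.filter_from (fun _ : seq E => True) B.
have FF : filter.ProperFilter F.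
  apply: filter.filter_from_proper.
    apply: filter.filter_from_filter; first by exists [::].
    move=> l1 l2 _ _; exists (l1 ++ l2) => //.
    move=> l' H; split=> e He; apply: H; apply List.in_or_app; tauto.
  by move=> l _; exists l.
have [G [GU FG]] := filter.ultraFilterLemma FF.
exists G; split.
- move=> X Y GX XY; exact: (filter.filterS XY GX).
- move=> X Y GX GY; exact: (filter.filterI GX GY).
- move=> H; have := @filter.filter_not_empty _ G _.
  apply. by have -> : classical_sets.set0 = (fun _ : seq E => False).
- move=> X; exact: (filter.in_ultra_setVsetC X GU).
- move=> e; apply: FG; exists [:: e] => //= l' H; apply: H; by left.
Qed.

Lemma ultra_of (E : Type) (U : (seq E -> Prop) -> Prop) :
  [/\ (forall X Y : seq E -> Prop, U X -> (forall i, X i -> Y i) -> U Y),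
      (forall X Y : seq E -> Prop, U X -> U Y -> U (fun i => X i /\ Y i)),
      ~ U (fun _ => False),
      (forall X : seq E -> Prop, U X \/ U (fun i => ~ X i)) &
      (forall e, U (fun l => List.In e l))] -> ultra U.
Proof. by case=> h1 h2 h3 h4 _; split. Qed.

Lemma asg4_map (A B : Type) (f : A -> B) a1 a2 b1 b2 i :
  f (asg4 a1 a2 b1 b2 i) = asg4 (f a1) (f a2) (f b1) (f b2) i.
Proof. by case: i => [[|[|[|[|m]]]] Hi]. Qed.

Definition i0 : 'I_4 := @Ordinal 4 0 isT.
Definition i1 : 'I_4 := @Ordinal 4 1 isT.
Definition i2 : 'I_4 := @Ordinal 4 2 isT.
Definition i3 : 'I_4 := @Ordinal 4 3 isT.

Lemma in_mapeq L X Y (f : X -> Y) (pi : seq (term L X * term L X)) d :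
  List.In d pi -> List.In (tmap f d.1, tmap f d.2) (mapeq f pi).
Proof. elim: pi => [|p pi IH] //= [->|H]; [by left|right; exact: IH]. Qed.

Lemma inP' (T : eqType) (x : T) (s : seq T) : List.In x s -> x \in s.
Proof. elim: s => [|y s IH] //= [->|/IH H]; rewrite in_cons ?eqxx // H orbT //. Qed.

Section Main.
Variable L : language.
Variable V : algebra L -> Prop.
Hypothesis hconst : exists s : sym L, ar s = 0.
Hypothesis hvar : is_variety V.
Hypothesis hCD : congruence_distributive V.
Hypothesis hCEP : CEP V.
Variable k : nat.
Variables gamma phi : seq (term L ('I_4 + 'I_k) * term L ('I_4 + 'I_k)).
Hypothesis hG : forall (n : nat) (s1 s2 t1 t2 : term L 'I_n) (pi : seq (term L 'I_n * term L 'I_n)),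
    ((forall A : algebra L, V A -> forall e : 'I_n -> A,
         holds e pi -> eval e t1 = eval e t2 -> eval e s1 = eval e s2)
     <->
     (forall A : algebra L, V A -> forall e : 'I_n -> A,
         holds e pi -> forall z : 'I_k -> A,
           holds (gasg e s1 s2 t1 t2 z) gamma -> holds (gasg e s1 s2 t1 t2 z) phi))
    /\
    (forall sigma : term L 'I_n * term L 'I_n,
       (forall A : algebra L, V A -> forall (e : 'I_n -> A) (z : 'I_k -> A),
           holds e pi -> holds (gasg e s1 s2 t1 t2 z) gamma ->
           eval e sigma.1 = eval e sigma.2)
       <->
       (forall A : algebra L, V A -> forall e : 'I_n -> A,
           holds e pi -> eval e sigma.1 = eval e sigma.2)).
Variable Ts : fm L void -> Prop.
Hypothesis hMC : model_completion (Th V) Ts.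

Lemma inhab (A : algebra L) : exists a : A, True.
Proof.
case: hconst => s Hs.
have f : 'I_(ar s) -> A by rewrite Hs; case=> m; rewrite ltn0.
by exists (op A s f).
Qed.

Definition gz (A : Type) (a1 a2 b1 b2 : A) (z : 'I_k -> A) : 'I_4 + 'I_k -> A :=
  fun v => match v with inl i => asg4 a1 a2 b1 b2 i | inr j => z j end.

Lemma gz_map (A B : Type) (f : A -> B) a1 a2 b1 b2 z :
  (fun v => f (gz a1 a2 b1 b2 z v)) = gz (f a1) (f a2) (f b1) (f b2) (fun j => f (z j)).
Proof. apply: functional_extensionality => -[i|j] //=; exact: asg4_map. Qed.

Definition Psi (A : algebra L) (a1 a2 b1 b2 : A) :=
  forall z, holds (gz a1 a2 b1 b2 z) gamma -> holds (gz a1 a2 b1 b2 z) phi.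

Definition CgP (A : algebra L) (a1 a2 b1 b2 : A) :=
  Cg (fun x y => x = b1 /\ y = b2) a1 a2.

Lemma Cg_cong (A : algebra L) (S : A -> A -> Prop) : congruence (Cg S).
Proof.
split.
- move=> x _ R HR _; exact: cR_refl.
- move=> x y _ _ H R HR HS; apply: cR_sym => //; exact: H.
- move=> x y z _ _ _ H1 H2 R HR HS; exact: (cR_trans HR (H1 R HR HS) (H2 R HR HS)).
- move=> s f g _ _ H R HR HS; apply: cR_op => // i; exact: H.
Qed.

Lemma Cg_base (A : algebra L) (S : A -> A -> Prop) x y : S x y -> Cg S x y.
Proof. by move=> H R _ HS; exact: HS. Qed.

Lemma KH (A B : algebra L) (h : A -> B) a1 a2 b1 b2 :
  hom h -> CgP a1 a2 b1 b2 -> CgP (h a1) (h a2) (h b1) (h b2).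
Proof.
move=> hh H R HR HS.
have HR' : congruence (fun x y => R (h x) (h y)).
  split.
  - move=> x _; exact: cR_refl.
  - move=> x y _ _; exact: cR_sym.
  - move=> x y z _ _ _; exact: cR_trans.
  - move=> s f g _ _ Hi; rewrite !hh; exact: cR_op.
apply: (H _ HR') => x y [-> ->]; exact: HS.
Qed.

Lemma KS (A B : algebra L) (h : A -> B) a1 a2 b1 b2 :
  V B -> hom h -> injective h -> CgP (h a1) (h a2) (h b1) (h b2) -> CgP a1 a2 b1 b2.
Proof.
move=> VB hh hi H R HR HS.
pose P := fun u : B => exists x, h x = u.
have HP : subuniverse P.
  move=> s f Hf.
  have Hc : forall i, {x | h x = f i} by move=> i; apply: constructive_indefinite_description; exact: Hf.
  exists (op A s (fun i => proj1_sig (Hc i))); rewrite hh; congr (op B s).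
  by apply: functional_extensionality => i; rewrite (proj2_sig (Hc i)).
pose R' := fun u v : B => exists x y, h x = u /\ h y = v /\ R x y.
have HR' : congruence_on P R'.
  split.
  - move=> u [x <-]; exists x, x; split => //; split => //; exact: cR_refl.
  - move=> u v _ _ [x [y [<- [<- Hxy]]]]; exists y, x; split => //; split => //; exact: cR_sym.
  - move=> u v w _ _ _ [x [y [<- [<- Hxy]]]] [y' [z [Ey [<- Hyz]]]].
    have Ey' := hi _ _ Ey; subst y'.
    exists x, z; split => //; split => //; exact: cR_trans Hxy Hyz.
  - move=> s f g _ _ Hfg.
    have Hc : forall i, {xy : A * A | h xy.1 = f i /\ h xy.2 = g i /\ R xy.1 xy.2}.
      move=> i; apply: constructive_indefinite_description.
      case: (Hfg i) => x [y H']; by exists (x, y).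
    exists (op A s (fun i => (proj1_sig (Hc i)).1)), (op A s (fun i => (proj1_sig (Hc i)).2)).
    rewrite !hh; split; [|split].
    + congr (op B s); apply: functional_extensionality => i; exact: (proj1 (proj2_sig (Hc i))).
    + congr (op B s); apply: functional_extensionality => i; exact: (proj1 (proj2 (proj2_sig (Hc i)))).
    + apply: cR_op => // i; exact: (proj2 (proj2 (proj2_sig (Hc i)))).
case: (hCEP VB HP HR') => Th [HTh Eq].
have Hb : Th (h b1) (h b2).
  apply/(Eq _ _ (ex_intro _ b1 erefl) (ex_intro _ b2 erefl)).
  exists b1, b2; split => //; split => //; exact: HS.
have Ha : Th (h a1) (h a2) by apply: H => // x y [-> ->].
move/(Eq _ _ (ex_intro _ a1 erefl) (ex_intro _ a2 erefl)): Ha => [x [y [Ex [Ey Hxy]]]].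
by rewrite -(hi _ _ Ex) -(hi _ _ Ey).
Qed.

Definition VC4 (pi : seq (term L 'I_4 * term L 'I_4)) (p q : term L 'I_4) :=
  forall B : algebra L, V B -> forall e : 'I_4 -> B, holds e pi ->
    eval e (Var i2) = eval e (Var i3) -> eval e p = eval e q.

Lemma Cg_Psi (A : algebra L) (a1 a2 b1 b2 : A) : V A -> CgP a1 a2 b1 b2 -> Psi a1 a2 b1 b2.
Proof.
move=> VA H.
pose g := asg4 a1 a2 b1 b2.
pose P := fun x : A => exists t : term L 'I_4, eval g t = x.
have HP : subuniverse P.
  move=> s f Hf.
  have Hc : forall i, {t | eval g t = f i} by move=> i; apply: constructive_indefinite_description; exact: Hf.
  exists (App s (fun i => proj1_sig (Hc i))) => /=; congr (op A s).
  by apply: functional_extensionality => i; rewrite (proj2_sig (Hc i)).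
pose R := fun x y : A => exists p q pi, eval g p = x /\ eval g q = y /\ holds g pi /\ VC4 pi p q.
have HR : congruence_on P R.
  split.
  - move=> x [t <-]; by exists t, t, [::].
  - move=> x y _ _ [p [q [pi [Ep [Eq [Hp Hv]]]]]]; exists q, p, pi; do 3 split => //.
    move=> B VB e He E; symmetry; exact: Hv.
  - move=> x y z _ _ _ [p [q [pi [Ep [Eq [Hp Hv]]]]]] [q' [r [pi' [Eq' [Er [Hp' Hv']]]]]].
    exists p, r, ((q, q') :: pi ++ pi'); do 2 split => //; split.
      split; [by rewrite Eq Eq'| exact/holds_cat].
    move=> B VB e [E1 /holds_cat [H1 H2]] E; rewrite (Hv B VB e H1 E) E1; exact: Hv'.
  - move=> s f g' _ _ Hfg.
    have Hc : forall i, {x : term L 'I_4 * term L 'I_4 * seq (term L 'I_4 * term L 'I_4) |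
      eval g x.1.1 = f i /\ eval g x.1.2 = g' i /\ holds g x.2 /\ VC4 x.2 x.1.1 x.1.2}.
      move=> i; apply: constructive_indefinite_description.
      case: (Hfg i) => p [q [pi Hh]]; by exists (p, q, pi).
    exists (App s (fun i => (proj1_sig (Hc i)).1.1)), (App s (fun i => (proj1_sig (Hc i)).1.2)),
      (flatten (map (fun i => (proj1_sig (Hc i)).2) (enum 'I_(ar s)))).
    split; [|split; [|split]].
    + rewrite /=; congr (op A s); apply: functional_extensionality => i; exact: (proj1 (proj2_sig (Hc i))).
    + rewrite /=; congr (op A s); apply: functional_extensionality => i; exact: (proj1 (proj2 (proj2_sig (Hc i)))).
    + apply/holdsP => d /in_flatten [i [_ Hd]].
      move: (proj1 (proj2 (proj2 (proj2_sig (Hc i))))) => /holdsP; apply; exact Hd.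
    + move=> B VB e He E /=; congr (op B s); apply: functional_extensionality => i.
      apply: (proj2 (proj2 (proj2 (proj2_sig (Hc i))))) => //.
      apply/holdsP => d Hd; move/holdsP: He; apply; apply/in_flatten; exists i; split => //; exact: enum_In.
case: (hCEP VA HP HR) => Th [HTh Eq].
have Pv : forall i, P (g i) by move=> i; exists (Var i).
have Hb : Th b1 b2.
  apply/(Eq _ _ (Pv i2) (Pv i3)); exists (Var i2), (Var i3), [::]; do 3 split => //.
have Ha : Th a1 a2 by apply: H => // x y [-> ->].
move/(Eq _ _ (Pv i0) (Pv i1)): Ha => [p [q [pi [Ep [Eq' [Hp Hv]]]]]].
have Hz := (proj1 (proj1 (hG p q (Var i2) (Var i3) pi)) Hv A VA g Hp).
move=> z; have -> : gz a1 a2 b1 b2 z = gasg g p q (Var i2) (Var i3) z.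
  by apply: functional_extensionality => -[i|j] //=; rewrite Ep Eq'.
exact: Hz.
Qed.

Fixpoint avars (A K : Type) (t : term L (A + K)) : seq A :=
  match t with
  | Var (inl a) => [:: a]
  | Var (inr _) => [::]
  | App s f => flatten (map (fun j => avars (f j)) (enum 'I_(ar s)))
  end.

Lemma eval_avars (B : algebra L) A K (e1 e2 : A + K -> B) (t : term L (A + K)) :
  (forall a, List.In a (avars t) -> e1 (inl a) = e2 (inl a)) ->
  (forall j, e1 (inr j) = e2 (inr j)) -> eval e1 t = eval e2 t.
Proof.
elim: t => [[a|j]|s f IH] /= H1 H2; first (by apply: H1; left); first exact: H2.
congr (op B s); apply: functional_extensionality => i; apply: IH => // a Ha; apply: H1.
apply/in_flatten; exists i; split => //; exact: enum_In.
Qed.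

Lemma reindex (A : Type) (a0 : A) (l : seq A) :
  exists n (idx : A -> 'I_n) (w : 'I_n -> A), forall x, List.In x l -> w (idx x) = x.
Proof.
elim: l => [|x l [n [idx [w IH]]]].
  by exists 1, (fun _ => ord0), (fun _ => a0).
exists n.+1, (fun y => if excluded_middle_informative (y = x) then ord_max else lift ord_max (idx y)),
  (fun i => match unlift ord_max i with Some j => w j | None => x end).
move=> y Hy; case: (excluded_middle_informative (y = x)) => [E|Hne].
  by rewrite unlift_none E.
rewrite liftK; apply: IH; case: Hy => // E; by case: Hne.
Qed.

Section FE.
Variable A : algebra L.
Variables a1 a2 b1 b2 : A.

Definition Dop (d : term L (A + 'I_k) * term L (A + 'I_k)) :=
  exists s (f : 'I_(ar s) -> A), d = (Var (inl (op A s f)), App s (fun j => Var (inl (f j)))).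

Lemma Dop_eval (B : algebra L) (e1 e2 : A + 'I_k -> B) d :
  Dop d -> (forall a, e1 (inl a) = e2 (inl a)) -> eval e1 d.1 = eval e2 d.1 /\ eval e1 d.2 = eval e2 d.2.
Proof.
move=> [s [f ->]] H /=; split; first exact: H.
congr (op B s); apply: functional_extensionality => j; exact: H.
Qed.

Lemma Dop_holds (eA : A + 'I_k -> A) d : Dop d -> (forall a, eA (inl a) = a) -> eval eA d.1 = eval eA d.2.
Proof.
move=> [s [f ->]] H /=; rewrite H; congr (op A s); apply: functional_extensionality => j; by rewrite H.
Qed.

Definition rho (v : 'I_4 + 'I_k) : A + 'I_k :=
  match v with inl i => inl (asg4 a1 a2 b1 b2 i) | inr j => inr j end.
Definition GG := mapeq rho gamma.

Lemma eval_talg_var X Y (f : Y -> X) (t : term L Y) :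
  eval (A := talg L X) (fun v => Var (f v)) t = tmap f t.
Proof. by elim: t => [y|s g IH] //=; congr (App s); apply: functional_extensionality => i; exact: IH. Qed.

Lemma translate (pA : seq (term L (A + 'I_k) * term L (A + 'I_k))) (extra : seq A) :
  (forall d, List.In d pA -> Dop d) ->
  exists n (idx : A -> 'I_n) (w : 'I_n -> A) (pi' : seq (term L 'I_n * term L 'I_n)),
  [/\ (forall x, List.In x extra -> w (idx x) = x),
      (forall (B : algebra L) (q : A -> B), hom q -> holds (fun i => q (w i)) pi'),
      (forall (B : algebra L) (e : 'I_n -> B) (z : 'I_k -> B),
         holds e pi' -> holds (gasg e (Var (idx a1)) (Var (idx a2)) (Var (idx b1)) (Var (idx b2)) z) gamma ->
         holds (fun v => match v with inl u => e (idx u) | inr j => z j end) (pA ++ GG)) &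
      (forall (B : algebra L) (e : 'I_n -> B) (z : 'I_k -> B),
         (fun v => match rho v with inl u => e (idx u) | inr j => z j end) =
         gasg e (Var (idx a1)) (Var (idx a2)) (Var (idx b1)) (Var (idx b2)) z)].
Proof.
move=> HD.
case: (reindex a1 (a1 :: a2 :: b1 :: b2 :: extra ++ flatten (map (fun d => avars d.1 ++ avars d.2) pA)))
  => n [idx [w Hw]].
pose idx' := fun v : A + 'I_k => match v with inl u => idx u | inr _ => idx a1 end.
exists n, idx, w, (mapeq idx' pA).
have Hrho : forall (B : algebra L) (e : 'I_n -> B) (z : 'I_k -> B),
         (fun v => match rho v with inl u => e (idx u) | inr j => z j end) =
         gasg e (Var (idx a1)) (Var (idx a2)) (Var (idx b1)) (Var (idx b2)) z.
  move=> B e z; apply: functional_extensionality => -[i|j] //=.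
  exact: (asg4_map (fun u => e (idx u))).
split => //.
- move=> x Hx; apply: Hw; do 4 right; apply List.in_or_app; by left.
- move=> B q hq; apply/holds_map.
  have Hd : holds (fun v : A + 'I_k => w (idx' v)) pA.
    apply/holdsP => d Hd.
    pose eA := fun v : A + 'I_k => match v with inl u => u | inr _ => a1 end.
    have Hin : forall a, List.In a (avars d.1 ++ avars d.2) -> w (idx a) = a.
      move=> a Ha; apply: Hw; do 4 right; apply List.in_or_app; right.
      apply/in_flatten; by exists d.
    rewrite (@eval_avars _ _ _ _ eA d.1) ?(@eval_avars _ _ _ _ eA d.2).
    + exact: Dop_holds (HD d Hd) _.
    + move=> a Ha; apply: Hin; apply List.in_or_app; by right.
    + by move=> j /=; apply: Hw; left.
    + move=> a Ha; apply: Hin; apply List.in_or_app; by left.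
    + by move=> j /=; apply: Hw; left.
  exact: (holds_hom hq Hd).
- move=> B e z Hpi Hg; apply/holds_cat; split.
  + move/holds_map: Hpi => /holdsP Hpi; apply/holdsP => d Hd.
    have [E1 E2] := Dop_eval (e1 := fun v => match v with inl u => e (idx u) | inr j => z j end)
                          (e2 := fun v => e (idx' v)) (HD d Hd) (fun a => erefl).
    rewrite E1 E2; exact: Hpi.
  + apply/holds_map; by rewrite (Hrho B e z).
Qed.

Lemma comb_relF (D : term L (A + 'I_k) * term L (A + 'I_k) -> Prop) (P : _ -> term L (A + 'I_k))
   (ps : seq (term L ('I_4 + 'I_k) * term L ('I_4 + 'I_k))) :
  (forall d, List.In d ps -> relF V D GG (P d.1) (P d.2)) ->
  exists pA, (forall d, List.In d pA -> D d) /\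
    forall d, List.In d ps -> VC V (pA ++ GG) (P d.1) (P d.2).
Proof.
elim: ps => [|d ps IH] H; first by exists [::]; split.
case: (H d (or_introl erefl)) => pA1 [H1 H2].
case: IH => [d' Hd'|pA2 [H3 H4]]; first by apply: H; right.
exists (pA1 ++ pA2); split.
  by move=> d' /List.in_app_iff [] ?; [apply: H1|apply: H3].
move=> d' [<-|Hd'].
- apply: VC_mono H2 => x; rewrite !List.in_app_iff; tauto.
- apply: VC_mono (H4 d' Hd') => x; rewrite !List.in_app_iff; tauto.
Qed.

Lemma FE : V A -> ~ CgP a1 a2 b1 b2 ->
  exists (C : algebra L) (h : A -> C) (z : 'I_k -> C), [/\ V C, hom h, injective h,
     holds (gz (h a1) (h a2) (h b1) (h b2) z) gamma & ~ holds (gz (h a1) (h a2) (h b1) (h b2) z) phi].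
Proof.
move=> VA nCg.
pose D := @Dop.
pose R := relF V D GG.
have HC : congruence (A := talg L (A + 'I_k)) R := relF_cong V D GG.
pose C := Falg V D GG.
pose h := fun x : A => qcl (A := talg L (A + 'I_k)) R (Var (inl x)) : C.
pose z := fun j => qcl (A := talg L (A + 'I_k)) R (Var (inr j)) : C.
have Egz : gz (h a1) (h a2) (h b1) (h b2) z = (fun v => qcl (A := talg L (A + 'I_k)) R (Var (rho v)) : C).
  apply: functional_extensionality => -[i|j] //=.
  by rewrite -(asg4_map (fun x : A => qcl (A := talg L (A + 'I_k)) R (Var (inl x)) : C)).
have evq : forall t, eval (A := C) (fun v => qcl (A := talg L (A + 'I_k)) R (Var (rho v))) t = qcl (A := talg L (A + 'I_k)) R (tmap rho t).
  by move=> t; rewrite (eval_q HC) eval_talg_var.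
have hhom : hom (B := C) h.
  move=> s f; rewrite /h /=; apply/(qcl_eq HC).
  apply: (cR_trans HC (y := App s (fun i => Var (inl (f i))))).
    exists [:: (Var (inl (op A s f)), App s (fun j => Var (inl (f j))))]; split.
      by move=> d [<-|[]]; exists s, f.
    by move=> B VB e [E _].
  apply: (cR_op HC) => i; apply: (cR_sym HC); exact: (qrepR HC).
exists C, h, z; split.
- exact: V_Falg.
- exact: hhom.
- move=> x y /(qcl_eq HC) [pA [HD Hv]].
  case: (translate [:: x; y] HD) => n [idx [w [pi' [Hw Hq Hpi Hrho]]]].
  have H : forall B : algebra L, V B -> forall e : 'I_n -> B, holds e pi' ->
              eval e (Var (idx x)) = eval e (Var (idx y)).
    apply: (proj1 (proj2 (hG (Var (idx a1)) (Var (idx a2)) (Var (idx b1)) (Var (idx b2)) pi')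
                  (Var (idx x), Var (idx y)))) => B VB e z' He Hg /=.
    exact: (Hv B VB _ (Hpi B e z' He Hg)).
  have /= E := H A VA w (Hq A id (fun _ _ => erefl)).
  by rewrite -(Hw x) ?E ?Hw //; [right; left| left].
- rewrite Egz; apply/holdsP => d Hd; rewrite !evq; apply/(qcl_eq HC); exists [::]; split => //.
  move=> B VB e /holdsP He; exact: (He (_, _) (in_mapeq rho Hd)).
- rewrite Egz => /holdsP Hphi.
  have := @comb_relF D (tmap rho) phi.
  case=> [d Hd|pA [HD Hv]].
    by apply/(qcl_eq HC); rewrite -!evq; apply: Hphi.
  case: (translate [:: a1; a2; b1; b2] HD) => n [idx [w [pi' [Hw Hq Hpi Hrho]]]].
  have H : forall B : algebra L, V B -> forall e : 'I_n -> B, holds e pi' ->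
     eval e (Var (idx b1)) = eval e (Var (idx b2)) -> eval e (Var (idx a1)) = eval e (Var (idx a2)).
    apply: (proj2 (proj1 (hG (Var (idx a1)) (Var (idx a2)) (Var (idx b1)) (Var (idx b2)) pi'))).
    move=> B VB e He z' Hg.
    apply/holdsP => d Hd.
    pose eX := fun v : A + 'I_k => match v with inl u => e (idx u) | inr j => z' j end.
    have := Hv d Hd B VB eX (Hpi B e z' He Hg); rewrite !eval_tmap -(Hrho B e z'); exact.
  apply: nCg => R' HR' HS.
  have := H (qalg R') (V_qalg hvar HR' VA) (fun i => qcl R' (w i)) (Hq _ _ (qcl_hom HR')) => /= Himp.
  have E1 : w (idx a1) = a1 by apply: Hw; left.
  have E2 : w (idx a2) = a2 by apply: Hw; right; left.
  have E3 : w (idx b1) = b1 by apply: Hw; right; right; left.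
  have E4 : w (idx b2) = b2 by apply: Hw; right; right; right; left.
  apply/(qcl_eq HR'); rewrite -E1 -E2; apply: Himp; rewrite E3 E4; apply/(qcl_eq HR'); exact: HS.
Qed.

End FE.

Lemma sat_map (C D : Type) (f : C -> D) (B : algebra L) (c : D -> B) (q : fm L C) e :
  sat c e (fm_map f q) <-> sat (fun x => c (f x)) e q.
Proof.
elim: q e => [t1 t2||q IH|q IHq r IHr|q IHq r IHr|q IHq r IHr|n q IH|n q IH] e /=.
- have E : forall t : term L (nat + C), eval (env e c) (tmap (sum_mapr f) t) = eval (env e (fun x => c (f x))) t.
    move=> t; rewrite eval_tmap; congr eval; by apply: functional_extensionality => -[].
  by rewrite !E.
- by [].
- by rewrite IH.
- by rewrite IHq IHr.
- by rewrite IHq IHr.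
- by rewrite IHq IHr.
- by split => H a; apply/IH; apply: H.
- by split => [[a /IH H]|[a /IH H]]; exists a.
Qed.

Fixpoint vars_t (t : term L nat) : seq nat :=
  match t with
  | Var n => [:: n]
  | App s f => flatten (map (fun j => vars_t (f j)) (enum 'I_(ar s)))
  end.

Lemma occ_vars (t : term L nat) n :
  occurs_t (inl n) (tmap inl t : term L (nat + void)) -> List.In n (vars_t t).
Proof.
elim: t => [m|s f IH] /=; first by case=> ->; left.
case=> i /IH H; apply/in_flatten; exists i; split => //; exact: enum_In.
Qed.

Definition closeAll (vs : seq nat) (q : fm L void) := foldr (fun n p => FAll n p) q vs.

Lemma closeAll_free vs q n : free_in n (closeAll vs q) -> ~ List.In n vs /\ free_in n q.
Proof.
elim: vs => [|m vs IH] /=; first by move=> H; split.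
move=> [Hnm /IH [H1 H2]]; split => //; case => [E|//]; by apply: Hnm.
Qed.

Lemma closeAll_univ vs q : universal q -> universal (closeAll vs q).
Proof. elim: vs => [|m vs IH] //= H; apply: univ_all; exact: IH. Qed.

Lemma closeAll_intro (B : algebra L) vs q (e : nat -> B) :
  (forall e', sat (vd B) e' q) -> sat (vd B) e (closeAll vs q).
Proof. elim: vs e => [|m vs IH] e H /=; first exact: (H e). move=> a; exact: IH. Qed.

Lemma upd_same (B : Type) (e : nat -> B) n : upd e n (e n) = e.
Proof. apply: functional_extensionality => m; rewrite /upd; by case: eqP => [->|]. Qed.

Lemma closeAll_elim (B : algebra L) vs q (e : nat -> B) :
  sat (vd B) e (closeAll vs q) -> sat (vd B) e q.
Proof. elim: vs e => [|m vs IH] e //= H; apply: IH; have := H (e m); by rewrite upd_same. Qed.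

Lemma sat_exs (B : algebra L) (c : void -> B) vs q (e : nat -> B) :
  sat c e (foldr (fun n p => FEx n p) q vs) <->
  exists e', (forall n, ~ List.In n vs -> e' n = e n) /\ sat c e' q.
Proof.
elim: vs e => [|m vs IH] e /=.
  by split => [H|[e' [He' H]]]; [exists e|have -> : e = e' by apply: functional_extensionality => n; rewrite He'].
split.
- move=> [a /IH [e' [He' H]]]; exists e'; split => // n Hn; rewrite He'; last by move=> ?; apply: Hn; right.
  rewrite /upd; case: eqP => // E; case: Hn; by left.
- move=> [e' [He' H]]; exists (e' m); apply/IH; exists e'; split => // n Hn.
  rewrite /upd; case: eqP => [->|Hnm] //; apply: He' => -[E|//]; by case: Hnm.
Qed.

Definition tau (v : 'I_4 + 'I_k) : nat + void :=
  match v with inl i => inl (nat_of_ord i) | inr j => inl (4 + nat_of_ord j) end.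

Definition conjF (pi : seq (term L ('I_4 + 'I_k) * term L ('I_4 + 'I_k))) : fm L void :=
  foldr (fun d acc => FAnd (FEq (tmap tau d.1) (tmap tau d.2)) acc) (FNeg FBot) pi.

Lemma sat_conjF (B : algebra L) (c : void -> B) e pi :
  sat c e (conjF pi) <-> holds (fun v => env e c (tau v)) pi.
Proof. elim: pi => [|d pi IH] /=; first by split => // _ []. by rewrite !eval_tmap IH. Qed.

Definition exF := foldr (fun n p => FEx n p) (FAnd (conjF gamma) (FNeg (conjF phi))) (iota 4 k).

Lemma ec_ext (A : algebra L) : V A ->
  exists (B : algebra L) (h : A -> B), [/\ V B, models (vd B) Ts, hom h & injective h].
Proof.
move=> VA; case: hMC => _ Huniv Hcompl.
have MA : models (vd A) (Th V) by move=> p [_ Hp] e; exact: Hp.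
case: (Hcompl A MA) => [[B [c Hc]] _].
have MB : models (vd B) Ts.
  move=> q Hq e; have := Hc (fm_map (vd A) q) (or_introl (ex_intro _ q (conj Hq erefl))) e.
  rewrite sat_map; congr sat; by apply: functional_extensionality => -[].
have hc : hom c.
  move=> s f.
  have := Hc (FEq (tmap inr (Var (op A s f))) (tmap inr (App s (fun j => Var (f j))))) _ (fun _ => c (op A s f)).
  apply; right; exists (Var (op A s f)), (App s (fun j => Var (f j))); left; split => //.
have ic : injective c.
  move=> x y Exy; apply: NNPP => Hne.
  have := Hc (FNeg (FEq (tmap inr (Var x)) (tmap inr (Var y)))) _ (fun _ => c x).
  by apply => //; right; exists (Var x), (Var y); right.
exists B, c; split => //.
case: hvar => E HE; apply/HE => -[l r] Ep e /=.
pose p := closeAll (vars_t l ++ vars_t r) (FEq (tmap inl l) (tmap inl r)).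
have Sp : sentence p.
  move=> n /closeAll_free [Hn /= [/occ_vars H|/occ_vars H]]; apply: Hn; apply List.in_or_app; tauto.
have Thp : Th V p.
  split => // A' VA' e'; apply: closeAll_intro => e'' /=; rewrite !eval_tmap.
  by move: VA' => /HE /(_ (l, r) Ep e'').
have Ent : entails (Th V) p by move=> B' c' Hc' e'; exact: Hc'.
have := (proj1 (Huniv p Sp (closeAll_univ _ (univ_qf (qf_eq _ _)))) Ent) B (vd B) MB e.
by move/closeAll_elim => /=; rewrite !eval_tmap.
Qed.

Lemma ec_transfer (B : algebra L) (a1 a2 b1 b2 : B) : V B -> models (vd B) Ts ->
  forall (C : algebra L) (h : B -> C) (z : 'I_k -> C), V C -> hom h -> injective h ->
  holds (gz (h a1) (h a2) (h b1) (h b2) z) gamma -> ~ holds (gz (h a1) (h a2) (h b1) (h b2) z) phi ->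
  exists z', holds (gz a1 a2 b1 b2 z') gamma /\ ~ holds (gz a1 a2 b1 b2 z') phi.
Proof.
move=> VB MB C h z VC hh ih Hg Hp.
case: (ec_ext VC) => D [c [VD MD hc ic]].
case: hMC => Hmc _ _.
pose g := fun x => c (h x).
have hg : hom g by move=> s f; rewrite /g hh hc.
have ig : injective g by move=> x y /ic /ih.
pose e := fun n => nth a1 [:: a1; a2; b1; b2] n.
have HD : sat (vd D) (fun n => g (e n)) exF.
  apply/sat_exs.
  exists (fun n => if n < 4 then g (e n) else oapp (fun j => c (z j)) (g (e n)) (insub (n - 4))).
  split.
    move=> n Hn; case: ifP => // Hn4; rewrite insubN //.
    apply/negP => Hk; apply: Hn; apply: inP; rewrite mem_iota; apply/andP; split.
      by rewrite leqNgt Hn4.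
    by rewrite -(ltn_add2l 4) subnKC // leqNgt Hn4 in Hk.
  have Ef : (fun v => env (fun n => if n < 4 then g (e n) else oapp (fun j => c (z j)) (g (e n)) (insub (n - 4)))
                       (vd D) (tau v)) = (fun v => c (gz (h a1) (h a2) (h b1) (h b2) z v)).
    apply: functional_extensionality => -[i|j] /=.
      rewrite ltn_ord; by case: i => [[|[|[|[|m]]]] Hi].
    by rewrite addKn valK.
  split; first by apply/sat_conjF; rewrite Ef; exact: holds_hom.
  move/sat_conjF; rewrite Ef => H; apply: Hp; exact: holds_inj hc ic H.
have := (proj2 (Hmc B D MB MD g ig hg exF e)) HD.
move/sat_exs => [e' [He' [/sat_conjF H1 /sat_conjF H2]]].
exists (fun j => e' (4 + j)).
have Ef : (fun v => env e' (vd B) (tau v)) = gz a1 a2 b1 b2 (fun j => e' (4 + j)).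
  apply: functional_extensionality => -[i|j] //=.
  rewrite He'; first by case: i => [[|[|[|[|m]]]] Hi].
  move=> /inP' /=; by rewrite mem_iota leqNgt ltn_ord.
by rewrite -Ef.
Qed.

Lemma Psi_Cg (B : algebra L) (a1 a2 b1 b2 : B) :
  V B -> models (vd B) Ts -> Psi a1 a2 b1 b2 -> CgP a1 a2 b1 b2.
Proof.
move=> VB MB HP; apply: NNPP => nC.
case: (FE VB nC) => C [h [z [VC hh ih Hg Hp]]].
case: (ec_transfer VB MB VC hh ih Hg Hp) => z' [H1 H2].
exact: H2 (HP z' H1).
Qed.

Section UltraK.
Variable I : Type.
Variable U : (I -> Prop) -> Prop.
Hypothesis HU : ultra U.
Ltac umono H := eapply (U_mono HU); [exact H|].

Lemma Umap (A B : I -> algebra L) (h : forall i, A i -> B i) :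
  (forall i, hom (h i)) -> (forall i, injective (h i)) ->
  exists j : Ualg U A -> Ualg U B, [/\ hom j, injective j &
    forall f, j (qcl (Ru (A:=A) U) f) = qcl (Ru (A:=B) U) (fun i => h i (f i))].
Proof.
move=> hh ih.
pose j := fun c : Ualg U A => qcl (Ru (A:=B) U) (fun i => h i (qrep c i)) : Ualg U B.
have Ej : forall f, j (qcl (Ru (A:=A) U) f) = qcl (Ru (A:=B) U) (fun i => h i (f i)).
  move=> f; apply/(Ueq HU); have := qrepR (Ru_cong HU A) f => H.
  umono H; by move=> i /= ->.
exists j; split => //.
- move=> s F.
  have -> : op (Ualg U A) s F = qcl (Ru (A:=A) U) (op (Palg A) s (fun jj => qrep (F jj))) by [].
  rewrite Ej.
  have -> : (fun jj => j (F jj)) = (fun jj => qcl (Ru (A:=B) U) (fun i => h i (qrep (F jj) i))) by [].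
  rewrite -(qcl_hom (Ru_cong HU B)); congr qcl; apply: functional_extensionality_dep => i.
  by rewrite /= hh.
- move=> c c'; case: (Ualg_rep c) => f ->; case: (Ualg_rep c') => f' ->.
  rewrite !Ej => /(Ueq HU) H; apply/(Ueq HU); umono H; by move=> i /ih.
Qed.

Lemma U_all (X : I -> Prop) : (forall i, X i) -> U X.
Proof. move=> H; umono (U_true HU); by move=> i _. Qed.

Lemma gz_U (A : I -> algebra L) (a1 a2 b1 b2 : Palg A) (z : 'I_k -> Ualg U A) :
  gz (qcl (Ru (A:=A) U) a1) (qcl (Ru (A:=A) U) a2) (qcl (Ru (A:=A) U) b1) (qcl (Ru (A:=A) U) b2) z =
  (fun v => qcl (Ru (A:=A) U) (gz a1 a2 b1 b2 (fun jj => qrep (z jj)) v)).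
Proof.
apply: functional_extensionality => -[i|jj] /=; last by rewrite qrepK.
by rewrite (asg4_map (qcl (Ru (A:=A) U))).
Qed.

Lemma gz_P (A : I -> algebra L) (a1 a2 b1 b2 : Palg A) (z : 'I_k -> Palg A) i :
  (fun v => gz a1 a2 b1 b2 z v i) = gz (a1 i) (a2 i) (b1 i) (b2 i) (fun jj => z jj i).
Proof.
apply: functional_extensionality => -[ii|jj] //=; exact: (asg4_map (fun f : Palg A => f i)).
Qed.

Lemma models_U (B : I -> algebra L) : (forall i, models (vd (B i)) Ts) -> models (vd (Ualg U B)) Ts.
Proof.
move=> MB q Hq e.
have -> : e = (fun n => qcl (Ru (A:=B) U) (qrep (e n))) by apply: functional_extensionality => n; rewrite qrepK.
apply/(los HU (fun i => inhab (B i))).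
apply: U_all => i; exact: MB.
Qed.

Lemma Kultra (A : I -> algebra L) (a1 a2 b1 b2 : Palg A) :
  (forall i, V (A i)) -> (forall i, CgP (a1 i) (a2 i) (b1 i) (b2 i)) ->
  CgP (A := Ualg U A) (qcl _ a1) (qcl _ a2) (qcl _ b1) (qcl _ b2).
Proof.
move=> VA KA.
have Hc : forall i, {Bh : {B : algebra L & A i -> B} |
    [/\ V (projT1 Bh), models (vd (projT1 Bh)) Ts, hom (projT2 Bh) & injective (projT2 Bh)]}.
  move=> i; apply: constructive_indefinite_description.
  case: (ec_ext (VA i)) => B [h H]; by exists (existT _ B h).
pose B := fun i => projT1 (proj1_sig (Hc i)).
pose h := fun i => projT2 (proj1_sig (Hc i)) : A i -> B i.
have VB : forall i, V (B i) by move=> i; case: (proj2_sig (Hc i)).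
have MB : forall i, models (vd (B i)) Ts by move=> i; case: (proj2_sig (Hc i)).
have hh : forall i, hom (h i) by move=> i; case: (proj2_sig (Hc i)).
have ih : forall i, injective (h i) by move=> i; case: (proj2_sig (Hc i)).
case: (Umap hh ih) => j [hj ij Ej].
have VW : V (Ualg U B) := V_qalg hvar (Ru_cong HU B) (V_Palg hvar VB).
apply: (KS VW hj ij); rewrite !Ej.
apply: Psi_Cg => //; first exact: models_U.
move=> z; rewrite gz_U => /(holds_U HU) Hg; apply/(holds_U HU); umono Hg; move=> i.
rewrite !gz_P; apply: Cg_Psi => //; exact: KH (hh i) (KA i).
Qed.

Lemma Kultra_neg (A : I -> algebra L) (a1 a2 b1 b2 : Palg A) :
  (forall i, V (A i)) -> (forall i, ~ CgP (a1 i) (a2 i) (b1 i) (b2 i)) ->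
  ~ CgP (A := Ualg U A) (qcl _ a1) (qcl _ a2) (qcl _ b1) (qcl _ b2).
Proof.
move=> VA nKA.
have Hc : forall i, {Bh : {B : algebra L & ((A i -> B) * ('I_k -> B))%type} |
    [/\ V (projT1 Bh), hom (projT2 Bh).1, injective (projT2 Bh).1,
     holds (gz ((projT2 Bh).1 (a1 i)) ((projT2 Bh).1 (a2 i)) ((projT2 Bh).1 (b1 i)) ((projT2 Bh).1 (b2 i)) (projT2 Bh).2) gamma &
     ~ holds (gz ((projT2 Bh).1 (a1 i)) ((projT2 Bh).1 (a2 i)) ((projT2 Bh).1 (b1 i)) ((projT2 Bh).1 (b2 i)) (projT2 Bh).2) phi]}.
  move=> i; apply: constructive_indefinite_description.
  case: (FE (VA i) (nKA i)) => C [h [z H]]; by exists (existT _ C (h, z)).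
pose B := fun i => projT1 (proj1_sig (Hc i)).
pose h := fun i => (projT2 (proj1_sig (Hc i))).1 : A i -> B i.
pose z := fun jj => (fun i => (projT2 (proj1_sig (Hc i))).2 jj) : Palg B.
have VB : forall i, V (B i) by move=> i; case: (proj2_sig (Hc i)).
have hh : forall i, hom (h i) by move=> i; case: (proj2_sig (Hc i)).
have ih : forall i, injective (h i) by move=> i; case: (proj2_sig (Hc i)).
have Hg : forall i, holds (gz (h i (a1 i)) (h i (a2 i)) (h i (b1 i)) (h i (b2 i)) (fun jj => z jj i)) gamma.
  by move=> i; case: (proj2_sig (Hc i)).
have Hp : forall i, ~ holds (gz (h i (a1 i)) (h i (a2 i)) (h i (b1 i)) (h i (b2 i)) (fun jj => z jj i)) phi.
  by move=> i; case: (proj2_sig (Hc i)).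
case: (Umap hh ih) => j [hj ij Ej].
have VW : V (Ualg U B) := V_qalg hvar (Ru_cong HU B) (V_Palg hvar VB).
move=> /(KH hj); rewrite !Ej => /(Cg_Psi VW) HP.
pose zW := fun jj => qcl (Ru (A:=B) U) (z jj) : Ualg U B.
have E : gz (qcl (Ru (A:=B) U) (fun i => h i (a1 i))) (qcl (Ru (A:=B) U) (fun i => h i (a2 i)))
            (qcl (Ru (A:=B) U) (fun i => h i (b1 i))) (qcl (Ru (A:=B) U) (fun i => h i (b2 i))) zW =
         (fun v => qcl (Ru (A:=B) U) (gz (fun i => h i (a1 i)) (fun i => h i (a2 i)) (fun i => h i (b1 i)) (fun i => h i (b2 i)) z v)).
  apply: functional_extensionality => -[i|jj] //=; by rewrite (asg4_map (qcl (Ru (A:=B) U))).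
have := HP zW; rewrite E => H.
have /H : holds (A := Ualg U B) (fun v => qcl (Ru (A:=B) U) (gz (fun i => h i (a1 i)) (fun i => h i (a2 i)) (fun i => h i (b1 i)) (fun i => h i (b2 i)) z v)) gamma.
  apply/(holds_U HU); apply: U_all => i; rewrite gz_P; exact: Hg.
move/(holds_U HU) => H'; apply: (U_false HU); umono H'; move=> i /= HH; apply: (Hp i); rewrite gz_P in HH; exact: HH.
Qed.

End UltraK.

Lemma Kprod (A B : algebra L) (a1 a2 b1 b2 : A) (a1' a2' b1' b2' : B) :
  V A -> V B -> CgP a1 a2 b1 b2 -> CgP a1' a2' b1' b2' ->
  CgP (A := palg A B) (a1, a1') (a2, a2') (b1, b1') (b2, b2').
Proof.
move=> VA VB HA HB.
have VP : V (palg A B) := V_palg hvar VA VB.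
pose th := fun u v => CgP (A := palg A B) u v (b1, b1') (b2, b2').
have Hth : congruence th := Cg_cong (fun x y : palg A B => x = (b1, b1') /\ y = (b2, b2')).
pose e1 := fun u v : palg A B => u.1 = v.1.
pose e2 := fun u v : palg A B => u.2 = v.2.
have He1 : congruence e1.
  split.
  - by [].
  - move=> x y _ _; exact: esym.
  - move=> x y z _ _ _; exact: eq_trans.
  - move=> s f g _ _ H; rewrite /e1 /=; congr (op A s); apply: functional_extensionality => i; exact: H.
have He2 : congruence e2.
  split.
  - by [].
  - move=> x y _ _; exact: esym.
  - move=> x y z _ _ _; exact: eq_trans.
  - move=> s f g _ _ H; rewrite /e2 /=; congr (op B s); apply: functional_extensionality => i; exact: H.
have Hb : th (b1, b1') (b2, b2') by apply: Cg_base.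
have Hsub : forall (e e' : palg A B -> palg A B -> Prop) x y,
    (forall u v, e u v -> e' u v -> u = v) ->
    Cg (fun a b => (e a b /\ th a b) \/ (e a b /\ e' a b)) x y -> th x y.
  move=> e e' x y Hee H; apply: H => // u v [[_ H]|[H1 H2]] //.
  rewrite (Hee u v H1 H2); exact: cR_refl.
have E12 : forall u v, e2 u v -> e1 u v -> u = v.
  by move=> [? ?] [? ?]; rewrite /e1 /e2 /= => -> ->.
have E21 : forall u v, e1 u v -> e2 u v -> u = v.
  by move=> [? ?] [? ?]; rewrite /e1 /e2 /= => -> ->.
have S1 : th (a1, a1') (a2, a1').
  pose J := Cg (fun u v : palg A B => th u v \/ e1 u v).
  have HJ : congruence J := Cg_cong _.
  pose al := fun x y : A => J (x, a1') (y, a1').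
  have Hal : congruence al.
    split.
    - move=> x _; exact: (cR_refl HJ).
    - move=> x y _ _; exact: (cR_sym HJ).
    - move=> x y z _ _ _; exact: (cR_trans HJ).
    - move=> s f g _ _ H.
      have H1 := cR_op HJ (f := fun i => (f i, a1')) (g := fun i => (g i, a1')) H.
      have E : forall x : A, J (x, a1') (x, op B s (fun _ => a1')).
        by move=> x; apply: Cg_base; right.
      apply: (cR_trans HJ (E _)); apply: (cR_trans HJ H1); apply: (cR_sym HJ); exact: E.
  have : al a1 a2.
    apply: HA => // x y [-> ->].
    apply: (cR_trans HJ (y := (b1, b1'))); first by apply: Cg_base; right.
    apply: (cR_trans HJ (y := (b2, b2'))); first by apply: Cg_base; left.
    by apply: Cg_base; right.
  move=> Hal12.
  have := proj1 (hCD VP He2 Hth He1 (a1, a1') (a2, a1')) (conj erefl Hal12).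
  exact: Hsub E12.
have S2 : th (a2, a1') (a2, a2').
  pose J := Cg (fun u v : palg A B => th u v \/ e2 u v).
  have HJ : congruence J := Cg_cong _.
  pose al := fun x y : B => J (a2, x) (a2, y).
  have Hal : congruence al.
    split.
    - move=> x _; exact: (cR_refl HJ).
    - move=> x y _ _; exact: (cR_sym HJ).
    - move=> x y z _ _ _; exact: (cR_trans HJ).
    - move=> s f g _ _ H.
      have H1 := cR_op HJ (f := fun i => (a2, f i)) (g := fun i => (a2, g i)) H.
      have E : forall x : B, J (a2, x) (op A s (fun _ => a2), x).
        by move=> x; apply: Cg_base; right.
      apply: (cR_trans HJ (E _)); apply: (cR_trans HJ H1); apply: (cR_sym HJ); exact: E.
  have : al a1' a2'.
    apply: HB => // x y [-> ->].
    apply: (cR_trans HJ (y := (b1, b1'))); first by apply: Cg_base; right.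
    apply: (cR_trans HJ (y := (b2, b2'))); first by apply: Cg_base; left.
    by apply: Cg_base; right.
  move=> Hal12.
  have := proj1 (hCD VP He1 Hth He2 (a2, a1') (a2, a2')) (conj erefl Hal12).
  exact: Hsub E21.
exact: (cR_trans Hth S1 S2).
Qed.

Record pt := Pt { pA : algebra L; p1 : pA; p2 : pA; p3 : pA; p4 : pA }.
Definition Eq4 := (term L 'I_4 * term L 'I_4)%type.
Definition ht (x : pt) (eps : Eq4) := holds (asg4 (p1 x) (p2 x) (p3 x) (p4 x)) [:: eps].
Definition Kpt (x : pt) := V (pA x) /\ CgP (p1 x) (p2 x) (p3 x) (p4 x).
Definition unitpt := @Pt (unitalg L) tt tt tt tt.

Lemma unitpt_K : Kpt unitpt.
Proof. split; first exact: V_unit. move=> R HR _; exact: (cR_refl HR). Qed.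

Fixpoint prodpt (l : seq pt) : pt :=
  match l with
  | [::] => unitpt
  | x :: l' => let y := prodpt l' in
      @Pt (palg (pA x) (pA y)) (p1 x, p1 y) (p2 x, p2 y) (p3 x, p3 y) (p4 x, p4 y)
  end.

Lemma prodpt_K l : (forall x, List.In x l -> Kpt x) -> Kpt (prodpt l).
Proof.
elim: l => [|x l IH] H /=; first exact: unitpt_K.
have [V1 K1] := H x (or_introl erefl).
have [V2 K2] := IH (fun y Hy => H y (or_intror Hy)).
split; first exact: V_palg. exact: Kprod.
Qed.

Lemma prodpt_ht l x eps : List.In x l -> ht (prodpt l) eps -> ht x eps.
Proof.
elim: l => [|y l IH] //= Hx.
rewrite /ht /= !eval_p => -[E _].
case: E => E1 E2.
have F1 : (fun v => (asg4 (p1 y, p1 (prodpt l)) (p2 y, p2 (prodpt l)) (p3 y, p3 (prodpt l)) (p4 y, p4 (prodpt l)) v).1)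
   = asg4 (p1 y) (p2 y) (p3 y) (p4 y).
  by apply: functional_extensionality => v; rewrite (asg4_map fst).
have F2 : (fun v => (asg4 (p1 y, p1 (prodpt l)) (p2 y, p2 (prodpt l)) (p3 y, p3 (prodpt l)) (p4 y, p4 (prodpt l)) v).2)
   = asg4 (p1 (prodpt l)) (p2 (prodpt l)) (p3 (prodpt l)) (p4 (prodpt l)).
  by apply: functional_extensionality => v; rewrite (asg4_map snd).
rewrite F1 in E1; rewrite F2 in E2.
case: Hx => [<-|Hx]; first by split.
by apply: IH => //; split.
Qed.

Lemma in_map_seq (T U : Type) (f : T -> U) (l : seq T) a : List.In a l -> List.In (f a) (map f l).
Proof. elim: l => [|b l IH] //= [->|H]; [by left|right; exact: IH]. Qed.

Lemma in_map_seq_inv (T U : Type) (f : T -> U) (l : seq T) y : List.In y (map f l) -> exists a, y = f a.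
Proof. elim: l => [|b l IH] //= [<-|H]; [by exists b|exact: IH]. Qed.

Section UP.
Variable U : (seq Eq4 -> Prop) -> Prop.
Hypothesis HU : ultra U.
Variable Q : seq Eq4 -> pt.
Definition ZA := Ualg U (fun l => pA (Q l)).
Definition z1 : ZA := qcl (Ru (A := fun l => pA (Q l)) U) (fun l => p1 (Q l)).
Definition z2 : ZA := qcl (Ru (A := fun l => pA (Q l)) U) (fun l => p2 (Q l)).
Definition z3 : ZA := qcl (Ru (A := fun l => pA (Q l)) U) (fun l => p3 (Q l)).
Definition z4 : ZA := qcl (Ru (A := fun l => pA (Q l)) U) (fun l => p4 (Q l)).

Lemma ht_U eps : ht (@Pt ZA z1 z2 z3 z4) eps <-> U (fun l => ht (Q l) eps).
Proof.
rewrite /ht /=.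
have -> : asg4 z1 z2 z3 z4 = (fun v => qcl (Ru (A := fun l => pA (Q l)) U)
            (asg4 (fun l => p1 (Q l)) (fun l => p2 (Q l)) (fun l => p3 (Q l)) (fun l => p4 (Q l)) v)).
  by apply: functional_extensionality => v; rewrite (asg4_map (qcl (Ru (A := fun l => pA (Q l)) U))).
etransitivity.
  exact: (holds_U HU (A := fun l => pA (Q l))
    (fun v => asg4 (fun l => p1 (Q l)) (fun l => p2 (Q l)) (fun l => p3 (Q l)) (fun l => p4 (Q l)) v) [:: eps]).
split => H; eapply (U_mono HU); (try exact H); move=> l /=;
  by rewrite (_ : (fun x => _) = asg4 (p1 (Q l)) (p2 (Q l)) (p3 (Q l)) (p4 (Q l))) //;
     apply: functional_extensionality => v; rewrite (asg4_map (fun f : Palg (fun l => pA (Q l)) => f l)).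
Qed.

Lemma VZ : (forall l, V (pA (Q l))) -> V ZA.
Proof. move=> H; exact: (V_qalg hvar (Ru_cong HU (fun l => pA (Q l))) (V_Palg hvar H)). Qed.

End UP.

Definition Sigma (eps : Eq4) := forall x : pt, Kpt x -> ht x eps.

Lemma claim1 (A : algebra L) (a1 a2 b1 b2 : A) :
  V A -> (forall eps, Sigma eps -> ht (@Pt A a1 a2 b1 b2) eps) -> CgP a1 a2 b1 b2.
Proof.
move=> VA HS.
pose x0 := @Pt A a1 a2 b1 b2.
have Hw : forall eps, {w : pt | Kpt w /\ (~ ht x0 eps -> ~ ht w eps)}.
  move=> eps; apply: constructive_indefinite_description.
  case: (classic (ht x0 eps)) => H; first by exists unitpt; split => //; exact: unitpt_K.
  apply: NNPP => Hn; apply: H; apply: HS => w Kw; apply: NNPP => Hw; apply: Hn; exists w; split => //.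
pose M := fun l : seq Eq4 => prodpt (map (fun eps => proj1_sig (Hw eps)) l).
have KM : forall l, Kpt (M l).
  move=> l; apply: prodpt_K => x Hx; case: (in_map_seq_inv Hx) => eps ->; exact: (proj1 (proj2_sig (Hw eps))).
have HM : forall l eps, List.In eps l -> ~ ht x0 eps -> ~ ht (M l) eps.
  move=> l eps Hl Hn /(prodpt_ht (in_map_seq (fun eps => proj1_sig (Hw eps)) Hl)).
  exact: (proj2 (proj2_sig (Hw eps)) Hn).
case: (ultra_exists Eq4) => U HU0; have HU := ultra_of HU0; case: HU0 => _ _ _ _ HUin.
have VZ' : V (ZA U M) := VZ HU (fun l => proj1 (KM l)).
have KZ : CgP (z1 U M) (z2 U M) (z3 U M) (z4 U M).
  exact: (Kultra HU (fun l => proj1 (KM l)) (fun l => proj2 (KM l))).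
have Htr : forall eps, ht (@Pt (ZA U M) (z1 U M) (z2 U M) (z3 U M) (z4 U M)) eps -> ht x0 eps.
  move=> eps /(ht_U HU) H; apply: NNPP => Hn; apply: (U_false HU).
  eapply (U_mono HU); first exact: (U_and HU H (HUin eps)).
  move=> l [H1 H2]; exact: HM l eps H2 Hn H1.
pose Z := ZA U M.
pose gZ := asg4 (z1 U M) (z2 U M) (z3 U M) (z4 U M).
pose gA := asg4 a1 a2 b1 b2.
pose P := fun u : Z => exists t : term L 'I_4, eval gZ t = u.
have HP : subuniverse P.
  move=> s f Hf.
  have Hc : forall i, {t | eval gZ t = f i} by move=> i; apply: constructive_indefinite_description; exact: Hf.
  exists (App s (fun i => proj1_sig (Hc i))) => /=; congr (op Z s).
  by apply: functional_extensionality => i; rewrite (proj2_sig (Hc i)).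
pose S := subalg HP.
have VS : V S := V_sub hvar HP VZ'.
pose sv := fun i : 'I_4 => (exist P (gZ i) (ex_intro _ (Var i) erefl) : S).
have KS' : CgP (sv i0) (sv i1) (sv i2) (sv i3).
  exact: (KS (a1 := sv i0) (a2 := sv i1) (b1 := sv i2) (b2 := sv i3) VZ' (@sub_hom _ _ _ HP) (@sub_inj _ _ _ HP) KZ).
have wd : forall t t', eval gZ t = eval gZ t' -> eval gA t = eval gA t'.
  move=> t t' E; have /Htr [] : ht (@Pt (ZA U M) (z1 U M) (z2 U M) (z3 U M) (z4 U M)) (t, t') by split.
  done.
pose f := fun u : S => eval gA (proj1_sig (constructive_indefinite_description _ (proj2_sig u))).
have fspec : forall (u : S) t, eval gZ t = proj1_sig u -> f u = eval gA t.
  move=> u t Et; rewrite /f; case: (constructive_indefinite_description _ _) => t' /= Et'.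
  by apply: wd; rewrite Et Et'.
have hf : hom f.
  move=> s F.
  pose tF := fun i => proj1_sig (constructive_indefinite_description _ (proj2_sig (F i))).
  have EtF : forall i, eval gZ (tF i) = proj1_sig (F i).
    by move=> i; rewrite /tF; case: (constructive_indefinite_description _ _).
  rewrite (fspec _ (App s tF)) /=.
    congr (op A s); apply: functional_extensionality => i; by rewrite (fspec (F i) (tF i)).
  congr (op Z s); apply: functional_extensionality => i; exact: EtF.
have := KH hf KS'.
by rewrite (fspec (sv i0) (Var i0) erefl) (fspec (sv i1) (Var i1) erefl) (fspec (sv i2) (Var i2) erefl) (fspec (sv i3) (Var i3) erefl).
Qed.

Lemma in_filter_sf (T : Type) (p : T -> bool) (l : seq T) x :
  List.In x (filter p l) <-> List.In x l /\ p x.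
Proof.
elim: l => [|y l IH] /=; first by split => // -[].
case Hy: (p y) => /=; rewrite IH; split.
- by case=> [<-|[? ?]]; [split => //; left| split => //; right].
- by case=> [[<-|?] ?]; [left|right].
- by case=> ? ?; split => //; right.
- by case=> [[E|?] Hp] //; subst; rewrite Hy in Hp.
Qed.

Lemma EDPC_main : EDPC V.
Proof.
apply: NNPP => Hn.
pose sb := fun eps => if excluded_middle_informative (Sigma eps) then true else false.
have Hsb : forall eps, sb eps = true <-> Sigma eps.
  by move=> eps; rewrite /sb; case: (excluded_middle_informative _).
pose sf := fun l : seq Eq4 => filter sb l.
have HQ : forall l, {x : pt | V (pA x) /\ holds (asg4 (p1 x) (p2 x) (p3 x) (p4 x)) (sf l) /\
                               ~ CgP (p1 x) (p2 x) (p3 x) (p4 x)}.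
  move=> l; apply: constructive_indefinite_description.
  apply: NNPP => Hno; apply: Hn; exists (sf l) => A VA a1 a2 b1 b2; split.
  - move=> HC; apply/holdsP => eps /in_filter_sf [_ /Hsb Hs].
    by have [] := Hs (@Pt A a1 a2 b1 b2) (conj VA HC).
  - move=> Hh; apply: NNPP => nC; apply: Hno; by exists (@Pt A a1 a2 b1 b2).
pose Q := fun l => proj1_sig (HQ l).
have VQ : forall l, V (pA (Q l)) by move=> l; case: (proj2_sig (HQ l)).
have nK : forall l, ~ CgP (p1 (Q l)) (p2 (Q l)) (p3 (Q l)) (p4 (Q l)).
  by move=> l; case: (proj2_sig (HQ l)) => _ [].
have HhQ : forall l, holds (asg4 (p1 (Q l)) (p2 (Q l)) (p3 (Q l)) (p4 (Q l))) (sf l).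
  by move=> l; case: (proj2_sig (HQ l)) => _ [].
case: (ultra_exists Eq4) => U HU0; have HU := ultra_of HU0; case: HU0 => _ _ _ _ HUin.
apply: (Kultra_neg HU VQ nK).
apply: (claim1 (VZ HU VQ)) => eps Hs.
apply/(ht_U HU); eapply (U_mono HU); first exact: (HUin eps).
move=> l Hl; split => //; move/holdsP: (HhQ l); apply; apply/in_filter_sf; split => //; exact/Hsb.
Qed.

End Main.

Theorem theorem5p7 (L : language) (V : algebra L -> Prop) :
  (exists s : sym L, ar s = 0) ->
  is_variety V ->
  congruence_distributive V ->
  CEP V ->
  guarded_deduction_theorem V ->
  (exists Ts : fm L void -> Prop, model_completion (Th V) Ts) ->
  EDPC V.
Proof.
move=> hc hv hcd hcep [k [gamma [phi hG]]] [Ts hMC].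
exact: (EDPC_main hc hv hcd hcep hG hMC).
Qed.
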